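(* Let $G=(V,E)$ be a simple undirected connected graph modeling a radio network, and let $F$ be a finite set of tours in $G$, each of which consists of a single link (i.e., each packet must be forwarded exactly once, from the tail to the head of its link), with all packets available at their source nodes from the start. Then the minimum number of rounds of a transmission schedule that delivers every packet of $F$ to its destination equals the chromatic number of the conflict graph of $F$.
   Context: Radio network model: a network is a simple undirected connected graph $G=(V,E)$; an oriented edge $(u,v)$ is a link $u\rightarrow v$ with tail $u$ and head $v$. Computation proceeds in synchronous rounds; in each round each node either transmits a message or listens. A node $v$ hears a message from its neighbor $u$ in round $t$ iff $v$ listens in round $t$ and $u$ is the only neighbor of $v$ transmitting in round $t$. A tour consists of a packet, its injection round, and a simple oriented path $\langle v_1,\dots,v_k\rangle$ it must traverse; its links are $v_i\rightarrow v_{i+1}$, its source is $v_1$ and its destination is $v_k$. The packet is routed along the tour when there are rounds $t_1<\dots<t_{k-1}$ (not earlier than the injection round) such that $v_i$ transmits the packet in round $t_i$ and $v_{i+1}$ hears it in round $t_i$. Conflicts: a node $w$ conflicts with a link $u\rightarrow v$ if $w=u$, or $w=v$, or $w$ and $v$ are neighbors; a node conflicts with a tour if it conflicts with some link of the tour. Two tours $f_0,f_1$ conflict if either they pass through a common node, or some node of one tour $f_i$ other than $f_i$'s destination conflicts with the other tour $f_{1-i}$. The conflict graph of a set $F$ of tours is the simple graph whose vertices are the tours in $F$, two distinct tours being adjacent iff they conflict. The chromatic number of a graph is the minimum number of colors in a proper vertex coloring. *)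

(* Defs.v *)
From mathcomp Require Import all_boot.
Set Implicit Arguments. Unset Strict Implicit. Unset Printing Implicit Defensive.

Definition simple_graph (T : finType) (e : rel T) : Prop :=
  symmetric e /\ irreflexive e.
Definition connected_graph (T : finType) (e : rel T) : Prop :=
  forall x y : T, connect e x y.

(* The simple graph with vertex set T in which distinct x, y are adjacent iff r x y. *)
Definition colorable (T : finType) (r : rel T) (k : nat) : bool :=
  [exists f : {ffun T -> 'I_k},
     [forall x, forall y, ((x != y) && r x y) ==> (f x != f y)]].

Lemma colorable_exists (T : finType) (r : rel T) : exists k, colorable r k.
Proof.
exists #|T|; apply/existsP; exists [ffun x => enum_rank x].
apply/forallP=> x; apply/forallP=> y; apply/implyP=> /andP[nxy _].
by rewrite !ffunE; apply: contra nxy => /eqP /enum_rank_inj ->.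
Qed.

Definition chromatic_number (T : finType) (r : rel T) : nat :=
  ex_minn (colorable_exists r).

Definition is_tour (T : finType) (e : rel T) (p : seq T) : bool :=
  match p with
  | [::] => false
  | x :: q => [&& q != [::], path e x q & uniq p]
  end.

Definition links (T : Type) (p : seq T) : seq (T * T) := zip p (behead p).

Definition destination (T : finType) (p : seq T) : option T :=
  if p is x :: q then Some (last x q) else None.

Definition conflicts_link (T : finType) (e : rel T) (w : T) (l : T * T) : bool :=
  [|| w == l.1, w == l.2 | e w l.2].

Definition conflicts_tour (T : finType) (e : rel T) (w : T) (p : seq T) : bool :=
  has (conflicts_link e w) (links p).

Definition conflicts_from (T : finType) (e : rel T) (p0 p1 : seq T) : bool :=
  has (fun w => (Some w != destination p0) && conflicts_tour e w p1) p0.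

Definition tours_conflict (T : finType) (e : rel T) (p0 p1 : seq T) : bool :=
  [|| has (mem p1) p0, conflicts_from e p0 p1 | conflicts_from e p1 p0].

(* conflict relation on a finite family of tours indexed by I
   (the conflict graph is the simple graph of chromatic_number, i.e.
    distinct tours are adjacent iff they conflict) *)
Definition conflict (T : finType) (e : rel T) (I : finType) (tour : I -> seq T)
  : rel I := fun i j => tours_conflict e (tour i) (tour j).

(* A schedule: in round t, node w transmits packet i (act t w = Some i)
   or listens (act t w = None).  The packet of tour i is identified with i. *)
Definition schedule (T I : finType) := nat -> T -> option I.

Definition hears (T I : finType) (e : rel T) (act : schedule T I)
  (t : nat) (u v : T) : Prop :=
  act t v = None /\ e u v /\ act t u <> None /\
  (forall w, e w v -> act t w <> None -> w = u).

(* node w holds packet i at (the start of) round t: w is the source of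
   tour i (all packets are injected in round 0), or w heard i earlier *)
Definition holds (T I : finType) (e : rel T) (tour : I -> seq T)
  (act : schedule T I) (t : nat) (w : T) (i : I) : Prop :=
  head w (tour i) = w /\ tour i != [::] \/
  exists t' u, t' < t /\ act t' u = Some i /\ hears e act t' u w.

Definition valid_schedule (T I : finType) (e : rel T) (tour : I -> seq T)
  (act : schedule T I) : Prop :=
  forall t w i, act t w = Some i -> holds e tour act t w i.

Definition routed_within (T I : finType) (e : rel T) (act : schedule T I)
  (i : I) (p : seq T) (k : nat) : Prop :=
  exists ts : seq nat,
    [/\ size ts = size (links p), sorted ltn ts, all (fun t => t < k) ts &
      forall (t : nat) (l : T * T), (t, l) \in zip ts (links p) ->
        act t l.1 = Some i /\ hears e act t l.1 l.2].

Definition delivers_all_within (T I : finType) (e : rel T) (tour : I -> seq T)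
  (k : nat) : Prop :=
  exists act : schedule T I,
    valid_schedule e tour act /\ forall i : I, routed_within e act i (tour i) k.

Definition is_minimum (P : nat -> Prop) (m : nat) : Prop :=
  P m /\ forall k, P k -> m <= k.

(* Main.v *)
Require Import Defs.
From mathcomp Require Import all_boot.

Lemma tourE (T : finType) (e : rel T) (p : seq T) :
  is_tour e p -> size p = 2 -> exists a b, p = [:: a; b] /\ e a b /\ a != b.
Proof.
case: p => [|a [|b [|c p]]] //= H _.
move: H; rewrite /= !andbT inE => /andP[eab nab].
by exists a, b.
Qed.

Arguments tourE {T e p}.

Lemma conflictE (T : finType) (e : rel T) a b c d :
  a != b -> c != d ->
  tours_conflict e [:: a; b] [:: c; d] =
  [|| a == c, a == d, b == c, b == d, e a d | e c b].
Proof.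
move=> nab ncd.
rewrite /tours_conflict /conflicts_from /conflicts_tour /links /destination /=.
rewrite !inE !eqxx /= !orbF.
have ->: (Some a != Some b) by rewrite inj_eq //; exact: Some_inj.
have ->: (Some c != Some d) by rewrite inj_eq //; exact: Some_inj.
rewrite /conflicts_link /=.
rewrite (eq_sym c a) (eq_sym c b).
by case: (a == c); case: (a == d); case: (b == c); case: (b == d);
   case: (e a d); case: (e c b).
Qed.

Theorem theorem1 (T : finType) (e : rel T)
  (Hsimple : simple_graph e) (Hconn : connected_graph e)
  (I : finType) (tour : I -> seq T)
  (Htour : forall i, is_tour e (tour i))
  (Hsingle : forall i, size (tour i) = 2) :
  is_minimum (delivers_all_within e tour) (chromatic_number (conflict e tour)).
Proof.
have tE i := tourE (Htour i) (Hsingle i).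
rewrite /chromatic_number; case: ex_minnP => m Hm Hmin; split; last first.
  move=> k [act [_ Hr]]; apply: Hmin.
  have: forall i, exists t : 'I_k, forall a b, tour i = [:: a; b] ->
      act t a = Some i /\ hears e act t a b.
    move=> i; have [a [b [ti [eab nab]]]] := tE i.
    have [ts [sz _ alk Hz]] := Hr i; move: sz alk Hz; rewrite ti /links /=.
    case: ts => [|t [|? ?]] //= _ /andP[tk _] Hz.
    exists (Ordinal tk) => a' b' [<- <-]; apply: (Hz t (a, b)).
    by rewrite inE.
  case/fin_all_exists => g Hg.
  apply/existsP; exists [ffun i => g i].
  apply/forallP => x; apply/forallP => y; apply/implyP => /andP[nxy].
  rewrite !ffunE /conflict.
  have [a [b [tx [eab nab]]]] := tE x; have [c [d [ty [ecd ncd]]]] := tE y.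
  rewrite tx ty conflictE //; apply: contraL => /eqP gxy.
  have [ax [bN [_ [_ Hb]]]] := Hg x a b tx.
  have [cy [dN [_ [_ Hd]]]] := Hg y c d ty.
  rewrite gxy in ax bN Hb.
  have xy : Some x <> Some y by move=> [] exy; rewrite exy eqxx in nxy.
  apply/negP => /or4P[/eqP ac|/eqP ad|/eqP bc|/orP[/eqP bd|/orP[ead|ecb]]].
  - by subst c; rewrite ax in cy.
  - by subst d; rewrite ax in dN.
  - by subst c; rewrite cy in bN.
  - subst d; have ca : c = a by apply: Hb => //; rewrite cy.
    by subst c; rewrite ax in cy.
  - have ac : a = c by apply: Hd => //; rewrite ax.
    by subst c; rewrite ax in cy.
  - have ca : c = a by apply: Hb => //; rewrite cy.
    by subst c; rewrite ax in cy.
case/existsP: Hm => f /forallP Hf.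
have Hc x y : x != y -> conflict e tour x y -> f x != f y.
  by move=> nxy cxy; have /forallP/(_ y)/implyP := Hf x; apply; rewrite nxy.
pose act : schedule T I := fun t w =>
  [pick i | (ohead (tour i) == Some w) && (val (f i) == t)].
exists act; split.
  move=> t w i; rewrite /act; case: pickP => // j /andP[hj _] [<-].
  left; have [a [b [tj _]]] := tE j; move: hj; rewrite tj /= => /eqP[->].
  by [].
move=> i; have [a [b [ti [eab nab]]]] := tE i.
have actE t w j : act t w = Some j -> ohead (tour j) = Some w /\ val (f j) = t.
  by rewrite /act; case: pickP => // j' /andP[/eqP h /eqP h'] [<-].
have acti : act (f i) a = Some i.
  rewrite /act; case: pickP => [j /andP[/eqP hj /eqP fj]|/(_ i)].
    have [c [d [tj [ecd ncd]]]] := tE j; move: hj; rewrite tj /= => -[ca].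
    subst c; case: (eqVneq j i) => [->//|nji].
    have := Hc _ _ nji; rewrite /conflict tj ti conflictE // eqxx /= => /(_ isT).
    by rewrite (val_inj fj) eqxx.
  by rewrite ti /= !eqxx.
exists [:: val (f i)]; rewrite ti /links /=; split => //.
  by rewrite ltn_ord.
move=> t l; rewrite inE => /eqP[-> ->] /=; split => //.
split; [|split; [exact: eab|split; [by rewrite acti|]]].
  case Hb: (act (f i) b) => [j|//].
  have [hj fj] := actE _ _ _ Hb.
  have [c [d [tj [ecd ncd]]]] := tE j; move: hj; rewrite tj /= => -[cb].
  subst c; have nji : j != i by apply: contraNneq nab => ji; subst j;
    move: tj; rewrite ti => -[->].
  have := Hc _ _ nji; rewrite /conflict tj ti conflictE // eqxx /= orbT.
  by rewrite (val_inj fj) eqxx => /(_ isT).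
move=> w ewb; case Hw: (act (f i) w) => [j|//] _.
have [hj fj] := actE _ _ _ Hw.
have [c [d [tj [ecd ncd]]]] := tE j; move: hj; rewrite tj /= => -[cw].
subst c; case: (eqVneq j i) => [ji|nji].
  by subst j; move: tj; rewrite ti => -[->].
have := Hc _ _ nji; rewrite /conflict tj ti conflictE // ewb /= !orbT.
by rewrite (val_inj fj) eqxx => /(_ isT).
Qed.
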